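(* Let $\lambda=1$ and let $T_1,T_2,T_3$ be $0$-currents in $\mathbb{R}^d$, each consisting of a single point mass of multiplicity $+1$ (so each has mass $1$ and positive orientation), located at three points whose pairwise distances all exceed $4$. Then the unique minimizer over integral $0$-currents $T$ of $\sum_{i=1}^3\mathbb{F}_1(T-T_i)$ is the zero (empty) $0$-current.
   Context: Integral $0$-currents are finite integer combinations of signed point masses. For a $0$-current $H$, $\mathbb{F}_\lambda(H)=\inf_{S}\operatorname{M}(H-\partial S)+\lambda\operatorname{M}(S)$, the infimum over $1$-currents $S$ in $\mathbb{R}^d$, where $\operatorname{M}$ denotes mass. The minimizer of $T\mapsto\sum_i\mathbb{F}_\lambda(T-T_i)$ over integral currents is called the median of the $T_i$. *)

(* Defs.v *)
From HB Require Import structures.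
From mathcomp Require Import all_boot all_order all_algebra.
From mathcomp Require Import all_classical all_reals.
Set Implicit Arguments. Unset Strict Implicit. Unset Printing Implicit Defensive.
Import Order.TTheory GRing.Theory Num.Theory.
Local Open Scope classical_set_scope.
Local Open Scope ring_scope.

Section Currents.
Variables (R : realType) (d : nat).
Notation pt := 'rV[R]_d.

Definition edist (a b : pt) : R :=
  Num.sqrt (\sum_(i < d) (a ord0 i - b ord0 i) ^+ 2).

(* A 0-current with integer multiplicities, given by its multiplicity
   function: the point mass of multiplicity H x at each x. *)
Definition current0 := pt -> int.

Definition integral_current0 (H : current0) : Prop :=
  exists s : seq pt, forall x, H x != 0 -> x \in s.

Definition zero0 : current0 := fun _ => 0.
Definition sub0 (H K : current0) : current0 := fun x => H x - K x.
Definition dirac0 (p : pt) : current0 := fun x => if x == p then 1 else 0.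

Definition mass0 (H : current0) : R :=
  \sum_(x \in [set: pt]) (`|H x|%:~R : R).

(* Integral polyhedral 1-chains: finite lists of oriented segments
   [a,b] (from a to b) with integer multiplicities m. *)
Definition chain1 := seq (pt * pt * int).

Definition bd1 (S : chain1) : current0 :=
  fun x => \sum_(sg <- S) (sg.2 * ((sg.1.2 == x)%:Z - (sg.1.1 == x)%:Z)).

(* mass of the chain as written (>= its true mass; equality for a
   non-overlapping representation, so the infimum below is unaffected) *)
Definition mass1 (S : chain1) : R :=
  \sum_(sg <- S) (`|sg.2|%:~R * edist sg.1.1 sg.1.2).

Definition flat (lambda : R) (H : current0) : R :=
  inf [set r : R | exists S : chain1,
         r = mass0 (sub0 H (bd1 S)) + lambda * mass1 S].

Definition median_obj3 (lambda : R) (T1 T2 T3 T : current0) : R :=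
  flat lambda (sub0 T T1) + flat lambda (sub0 T T2) + flat lambda (sub0 T T3).

End Currents.

(* Main.v *)
Require Import Defs.
From HB Require Import structures.
From mathcomp Require Import all_boot all_order all_algebra.
From mathcomp Require Import all_classical all_reals.
From mathcomp Require Import ring lra.
Import Order.TTheory GRing.Theory Num.Theory.
Local Open Scope ring_scope.

Section Aux.
Variables (R : realType) (d : nat).
Notation pt := 'rV[R]_d.
Notation e := (@edist R d).

Lemma edist_ge0 (a b : pt) : 0 <= e a b.
Proof. exact: sqrtr_ge0. Qed.

Lemma edist_sym (a b : pt) : e a b = e b a.
Proof.
rewrite /edist; congr Num.sqrt; apply: eq_bigr => i _.
by rewrite -sqrrN opprB.
Qed.

Lemma edist_xx (a : pt) : e a a = 0.
Proof.
rewrite /edist big1 ?sqrtr0 // => i _; by rewrite subrr expr0n.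
Qed.

Lemma cs_sum (u v : 'I_d -> R) :
  \sum_i u i * v i <= Num.sqrt (\sum_i u i ^+ 2) * Num.sqrt (\sum_i v i ^+ 2).
Proof.
set A := \sum_i u i ^+ 2; set B := \sum_i v i ^+ 2.
have A0 : 0 <= A by apply: sumr_ge0 => i _; apply: sqr_ge0.
have B0 : 0 <= B by apply: sumr_ge0 => i _; apply: sqr_ge0.
set a := Num.sqrt A; set b := Num.sqrt B.
have a0 : 0 <= a by apply: sqrtr_ge0.
have b0 : 0 <= b by apply: sqrtr_ge0.
have aA : a ^+ 2 = A by apply: sqr_sqrtr.
have bB : b ^+ 2 = B by apply: sqr_sqrtr.
set C := \sum_i u i * v i.
have key : 0 <= \sum_i (b * u i - a * v i) ^+ 2 by apply: sumr_ge0 => i _; apply: sqr_ge0.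
have E : \sum_i (b * u i - a * v i) ^+ 2 = b ^+ 2 * A - 2 * a * b * C + a ^+ 2 * B.
  rewrite (eq_bigr (fun i => b^+2 * u i ^+2 - (2*a*b) * (u i * v i) + a^+2 * v i^+2)); last by move=> i _; ring.
  by rewrite !big_split /= sumrN -!mulr_sumr.
rewrite E bB aA in key.
have [ab0|abpos] := eqVneq (a * b) 0.
  move/eqP: (ab0); rewrite mulf_eq0 => /orP[/eqP a00|/eqP b00].
  - have Au : forall i, u i = 0.
      move=> i; have := aA; rewrite a00 expr0n /= => /esym Hs.
      have H := psumr_eq0P (fun i _ => sqr_ge0 (u i)) Hs.
      by apply/eqP; rewrite -sqrf_eq0; apply/eqP; apply: H.
    by rewrite ab0 /C big1 // => i _; rewrite Au mul0r.
  - have Bv : forall i, v i = 0.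
      move=> i; have := bB; rewrite b00 expr0n /= => /esym Hs.
      have H := psumr_eq0P (fun i _ => sqr_ge0 (v i)) Hs.
      by apply/eqP; rewrite -sqrf_eq0; apply/eqP; apply: H.
    by rewrite ab0 /C big1 // => i _; rewrite Bv mulr0.
have abp : 0 < a * b by rewrite lt_def abpos mulr_ge0.
rewrite -aA -bB in key.
have : 0 <= (a * b) * (2 * (a * b - C)) by nra.
rewrite pmulr_rge0 //; lra.
Qed.

Lemma edist_tri (a b c : pt) : e a c <= e a b + e b c.
Proof.
rewrite /edist.
set u := fun i => a ord0 i - b ord0 i; set v := fun i => b ord0 i - c ord0 i.
have -> : \sum_i (a ord0 i - c ord0 i) ^+ 2 = \sum_i (u i + v i) ^+ 2.
  by apply: eq_bigr => i _; rewrite /u /v; congr (_ ^+ 2); ring.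
rewrite -/(Num.sqrt (\sum_i u i ^+ 2)) -/(Num.sqrt (\sum_i v i ^+ 2)).
have cs := cs_sum u v.
set A := \sum_i u i ^+ 2 in cs *; set B := \sum_i v i ^+ 2 in cs *.
have A0 : 0 <= A by apply: sumr_ge0 => i _; apply: sqr_ge0.
have B0 : 0 <= B by apply: sumr_ge0 => i _; apply: sqr_ge0.
have aA : Num.sqrt A ^+ 2 = A by apply: sqr_sqrtr.
have bB : Num.sqrt B ^+ 2 = B by apply: sqr_sqrtr.
have a0 : 0 <= Num.sqrt A by apply: sqrtr_ge0.
have b0 : 0 <= Num.sqrt B by apply: sqrtr_ge0.
have E : \sum_i (u i + v i) ^+ 2 = A + 2 * \sum_i u i * v i + B.
  rewrite (eq_bigr (fun i => u i ^+2 + 2 * (u i * v i) + v i^+2)); last by move=> i _; ring.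
  by rewrite !big_split /= -!mulr_sumr.
rewrite E -[X in _ <= X]ger0_norm ?addr_ge0 // -sqrtr_sqr ler_sqrt ?sqr_ge0 //.
rewrite -{1}aA -{1}bB; nra.
Qed.


Lemma fsumE (g : pt -> R) (r : seq pt) : uniq r -> (forall x, g x != 0 -> x \in r) ->
  (\sum_(x \in [set: pt]) g x)%classic = \sum_(x <- r) g x.
Proof.
move=> ur hr; rewrite (fsbigE r) //.
  by apply: eq_bigl => x; rewrite in_setT.
move=> i _ ir; apply/eqP; apply: contraNT ir; exact: hr.
Qed.

Lemma sum_supp (g : pt -> R) (r1 r2 : seq pt) : uniq r1 -> uniq r2 ->
  (forall x, g x != 0 -> x \in r1) -> (forall x, g x != 0 -> x \in r2) ->
  \sum_(x <- r1) g x = \sum_(x <- r2) g x.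
Proof. by move=> u1 u2 h1 h2; rewrite -(fsumE _ _ u1 h1) (fsumE _ _ u2 h2). Qed.

Lemma sum_delta (f : pt -> R) (r : seq pt) (b : pt) : uniq r -> b \in r ->
  \sum_(x <- r) ((b == x)%:R * f x) = f b.
Proof.
move=> ur br; rewrite (@sum_supp _ r [:: b]) //.
- by rewrite big_seq1 eqxx mul1r.
- by move=> x /=; case Hbx: (b == x); [move/eqP: Hbx => <- | rewrite mul0r eqxx].
- by move=> x /=; case Hbx: (b == x); [move/eqP: Hbx => <-; rewrite inE | rewrite mul0r eqxx].
Qed.

Lemma mass0E (H : current0 R d) (r : seq pt) : uniq r -> (forall x, H x != 0 -> x \in r) ->
  mass0 H = \sum_(x <- r) (`|H x|%:~R : R).
Proof.
move=> ur hr; rewrite /mass0 (fsumE _ _ ur) // => x Hx; apply: hr.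
by apply: contraNneq Hx => ->.
Qed.


Definition lip (f : pt -> R) := forall a b, f a - f b <= e a b.

Lemma bd_sum (S : chain1 R d) (f : pt -> R) (pts : seq pt) : uniq pts ->
  (forall sg, sg \in S -> (sg.1.1 \in pts) && (sg.1.2 \in pts)) ->
  \sum_(x <- pts) (bd1 S x)%:~R * f x = \sum_(sg <- S) (sg.2)%:~R * (f sg.1.2 - f sg.1.1).
Proof.
move=> up; elim: S => [|sg S IH] hS.
  rewrite big_nil big1 // => x _; by rewrite /bd1 big_nil mul0r.
rewrite big_cons -IH; last by move=> sg' h; apply: hS; rewrite inE h orbT.
have /andP[ain bin] := hS sg (mem_head _ _).
have E : forall x, (bd1 (sg :: S) x)%:~R * f x = (sg.2)%:~R * ((sg.1.2 == x)%:R * f x)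
     - (sg.2)%:~R * ((sg.1.1 == x)%:R * f x) + (bd1 S x)%:~R * f x.
  move=> x; rewrite /bd1 big_cons intrD intrM intrB -!pmulrn mulrDl mulrBr mulrBl !mulrA //.
rewrite (eq_bigr _ (fun x _ => E x)) big_split /= sumrB -!mulr_sumr !sum_delta //.
by rewrite mulrBr.
Qed.


Lemma dual (H : current0 R d) (r : seq pt) (f : pt -> R) (S : chain1 R d) :
  uniq r -> (forall x, H x != 0 -> x \in r) -> lip f -> (forall x, `|f x| <= 1) ->
  \sum_(x <- r) (H x)%:~R * f x <= mass0 (sub0 H (bd1 S)) + 1 * mass1 S.
Proof.
move=> ur hr lf bf.
set pts := undup (r ++ flatten [seq [:: sg.1.1; sg.1.2] | sg <- S]).
have upts : uniq pts by apply: undup_uniq.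
have rin : forall x, x \in r -> x \in pts by move=> x xr; rewrite mem_undup mem_cat xr.
have ein : forall sg, sg \in S -> (sg.1.1 \in pts) && (sg.1.2 \in pts).
  move=> sg sgS; rewrite !mem_undup !mem_cat; apply/andP; split; apply/orP; right;
    apply/flatten_mapP; exists sg => //; by rewrite !inE eqxx ?orbT.
have supp : forall x, sub0 H (bd1 S) x != 0 -> x \in pts.
  move=> x; apply: contraTT => xn.
  have Hx : H x = 0.
    by apply/eqP; apply: contraNT xn => /hr; apply: rin.
  have Bx : bd1 S x = 0.
    rewrite /bd1 big1_seq // => sg /andP[_ sgS].
    have /andP[a b] := ein sg sgS.
    have -> : (sg.1.2 == x) = false by apply/negP => /eqP E; move: xn; rewrite -E b.
    have -> : (sg.1.1 == x) = false by apply/negP => /eqP E; move: xn; rewrite -E a.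
    by rewrite subrr mulr0.
  by rewrite /sub0 Hx Bx subrr.
rewrite (mass0E _ _ upts supp).
rewrite (@sum_supp (fun x => (H x)%:~R * f x) r pts ur upts); first last.
- move=> x Hx; apply: rin; apply: hr; apply: contraNneq Hx => ->; by rewrite mul0r.
- move=> x Hx; apply: hr; apply: contraNneq Hx => ->; by rewrite mul0r.
have E : forall x, (H x)%:~R * f x = (sub0 H (bd1 S) x)%:~R * f x + (bd1 S x)%:~R * f x.
  by move=> x; rewrite /sub0 intrB; ring.
rewrite (eq_bigr _ (fun x _ => E x)) big_split /= (bd_sum _ _ _ upts ein) mul1r.
apply: lerD.
  apply: ler_sum => x _; rewrite intr_norm.
  apply: le_trans (ler_norm _) _; rewrite normrM; apply: ler_piMr => //.
rewrite /mass1; apply: ler_sum => sg _.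
rewrite intr_norm; apply: le_trans (ler_norm _) _; rewrite normrM; apply: ler_wpM2l => //.
have h1 := lf sg.1.2 sg.1.1; have h2 := lf sg.1.1 sg.1.2.
rewrite edist_sym in h1; rewrite ler_norml; apply/andP; split; lra.
Qed.


Lemma flat_ge (H : current0 R d) (r : seq pt) (f : pt -> R) :
  uniq r -> (forall x, H x != 0 -> x \in r) -> lip f -> (forall x, `|f x| <= 1) ->
  \sum_(x <- r) (H x)%:~R * f x <= flat 1 H.
Proof.
move=> ur hr lf bf; apply: lb_le_inf.
  by exists (mass0 (sub0 H (bd1 [::])) + 1 * mass1 (@nil (pt * pt * int))), [::].
by move=> y [S ->]; apply: dual.
Qed.

Lemma mass0_ge0 (H : current0 R d) : 0 <= mass0 H.
Proof. by apply: fsumr_ge0 => x _; rewrite intr_norm. Qed.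

Lemma mass1_ge0 (S : chain1 R d) : 0 <= mass1 S.
Proof. by apply: sumr_ge0 => sg _; rewrite intr_norm mulr_ge0 ?edist_ge0. Qed.

Lemma flat_le (H : current0 R d) : flat 1 H <= mass0 H.
Proof.
have -> : mass0 H = mass0 (sub0 H (bd1 [::])) + 1 * mass1 (@nil (pt * pt * int)).
  rewrite /mass1 big_nil mulr0 addr0; congr mass0.
  by apply: boolp.funext => x; rewrite /sub0 /bd1 big_nil subr0.
apply: ge_inf; last by exists [::].
exists 0 => y [S ->]; by rewrite addr_ge0 ?mul1r ?mass0_ge0 ?mass1_ge0.
Qed.


Definition cert (q : pt) (f : pt -> R) := [/\ lip f, (forall x, `|f x| <= 1) & f q = -1].

Lemma flat_dirac_ge (T : current0 R d) (r : seq pt) (p : pt) (f : pt -> R) :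
  uniq r -> (forall x, T x != 0 -> x \in r) -> p \in r -> cert p f ->
  1 + \sum_(x <- r) (T x)%:~R * f x <= flat 1 (sub0 T (dirac0 p)).
Proof.
move=> ur hr pr [lf bf fp].
apply: le_trans (flat_ge _ _ _ ur _ lf bf); last first.
  move=> x; rewrite /sub0 /dirac0; case: (x == p) / eqP => [->|_] // .
  by rewrite subr0; apply: hr.
have E : forall x, (sub0 T (dirac0 p) x)%:~R * f x = (T x)%:~R * f x - (p == x)%:R * f x.
  move=> x; rewrite /sub0 /dirac0 eq_sym intrB mulrBl; case: (p == x) => //.
rewrite (eq_bigr _ (fun x _ => E x)) sumrB sum_delta // fp; lra.
Qed.

Lemma obj_ge (T : current0 R d) (r : seq pt) (p1 p2 p3 : pt) (f1 f2 f3 : pt -> R) :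
  uniq r -> (forall x, T x != 0 -> x \in r) -> p1 \in r -> p2 \in r -> p3 \in r ->
  cert p1 f1 -> cert p2 f2 -> cert p3 f3 ->
  3 + \sum_(x <- r) (T x)%:~R * (f1 x + f2 x + f3 x)
    <= median_obj3 1 (dirac0 p1) (dirac0 p2) (dirac0 p3) T.
Proof.
move=> ur hr r1 r2 r3 c1 c2 c3.
have h1 := flat_dirac_ge _ _ _ _ ur hr r1 c1.
have h2 := flat_dirac_ge _ _ _ _ ur hr r2 c2.
have h3 := flat_dirac_ge _ _ _ _ ur hr r3 c3.
rewrite /median_obj3.
have -> : \sum_(x <- r) (T x)%:~R * (f1 x + f2 x + f3 x) =
  \sum_(x <- r) (T x)%:~R * f1 x + \sum_(x <- r) (T x)%:~R * f2 x + \sum_(x <- r) (T x)%:~R * f3 x.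
  by rewrite -!big_split /=; apply: eq_bigr => x _; ring.
lra.
Qed.

Lemma mass_dirac (p : pt) : mass0 (sub0 (@zero0 R d) (dirac0 p)) = 1.
Proof.
rewrite (mass0E _ [:: p]) //; last first.
  move=> x; rewrite /sub0 /zero0 /dirac0; case: (x == p) / eqP => [->|_]; rewrite ?inE //.
by rewrite big_seq1 /sub0 /zero0 /dirac0 eqxx sub0r normrN.
Qed.

Lemma obj0_le (p1 p2 p3 : pt) : median_obj3 1 (dirac0 p1) (dirac0 p2) (dirac0 p3) (@zero0 R d) <= 3.
Proof.
rewrite /median_obj3.
have h1 := flat_le (sub0 (@zero0 R d) (dirac0 p1)).
have h2 := flat_le (sub0 (@zero0 R d) (dirac0 p2)).
have h3 := flat_le (sub0 (@zero0 R d) (dirac0 p3)).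
rewrite !mass_dirac in h1 h2 h3; lra.
Qed.


Ltac splitif := case: ifPn => [?|]; [| rewrite -ltNge => ?].

Definition mx (a c : R) := if a <= c then c else a.
Definition mn (a c : R) := if a <= c then a else c.

Lemma mx_cases (a c : R) : (a <= c /\ mx a c = c) \/ (c < a /\ mx a c = a).
Proof. rewrite /mx; case: ifPn => h; [left|right]; split => //; by rewrite ltNge. Qed.

Lemma mn_cases (a c : R) : (a <= c /\ mn a c = a) \/ (c < a /\ mn a c = c).
Proof. rewrite /mn; case: ifPn => h; [left|right]; split => //; by rewrite ltNge. Qed.

Ltac noM t := match t with context[mx _ _] => fail 1 | context[mn _ _] => fail 1 | _ => idtac end.

Ltac dm := match goal with
 | |- context[mx ?a ?c] => noM a; noM c;
     case: (mx_cases a c) => [[? ->]|[? ->]]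
 | |- context[mn ?a ?c] => noM a; noM c;
     case: (mn_cases a c) => [[? ->]|[? ->]]
 end.

Lemma lip_mx (f g : pt -> R) : lip f -> lip g -> lip (fun x => mx (f x) (g x)).
Proof.
move=> lf lg a c; have h1 := lf a c; have h2 := lg a c; rewrite /mx.
by do 2 splitif; lra.
Qed.

Lemma lip_mn (f g : pt -> R) : lip f -> lip g -> lip (fun x => mn (f x) (g x)).
Proof.
move=> lf lg a c; have h1 := lf a c; have h2 := lg a c; rewrite /mn.
by do 2 splitif; lra.
Qed.

Lemma lip_cst (k : R) : lip (fun _ => k).
Proof. by move=> a c; rewrite subrr edist_ge0. Qed.

Lemma lip_plus (q : pt) (k : R) : lip (fun x => k + e x q).
Proof.
move=> a c; have h := edist_tri a c q.
have := edist_tri c a q; rewrite (edist_sym c a) => h2; lra.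
Qed.

Lemma lip_minus (q : pt) (k : R) : lip (fun x => k - e x q).
Proof.
move=> a c; have h := edist_tri a c q.
have := edist_tri c a q; rewrite (edist_sym c a) => h2; lra.
Qed.

Lemma lip_half (f : pt -> R) : lip f -> lip (fun x => f x / 2).
Proof. move=> lf a c; have := lf a c; have := edist_ge0 a c; lra. Qed.

Definition bump (q x : pt) := mx 0 (1 - e x q).
Definition phi (q qj qk : pt) (x : pt) := mn (mx (bump qj x) (bump qk x) / 2) (-1 + e x q).

Lemma lip_bump q : lip (bump q).
Proof. exact: (@lip_mx (fun _ => 0) (fun x => 1 - e x q) (lip_cst 0) (lip_minus q 1)). Qed.

Lemma lip_M qj qk : lip (fun x => mx (bump qj x) (bump qk x)).
Proof. exact: (@lip_mx (bump qj) (bump qk) (lip_bump qj) (lip_bump qk)). Qed.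

Lemma lip_phi q qj qk : lip (phi q qj qk).
Proof. exact: (@lip_mn (fun x => mx (bump qj x) (bump qk x) / 2) (fun x => -1 + e x q) (@lip_half (fun x => mx (bump qj x) (bump qk x)) (lip_M qj qk)) (lip_plus q (-1))). Qed.

Lemma M_bnd qj qk x : 0 <= mx (bump qj x) (bump qk x) <= 1.
Proof.
have h1 := edist_ge0 x qj; have h2 := edist_ge0 x qk; rewrite /bump.
by repeat dm; apply/andP; split; lra.
Qed.

Lemma phi_cert q qj qk : cert q (phi q qj qk).
Proof.
split; first exact: lip_phi.
  move=> x; have := M_bnd qj qk x; have h := edist_ge0 x q; rewrite /phi.
  move: (mx (bump qj x) (bump qk x)) => m /andP[h1 h2]; dm; rewrite ler_norml; apply/andP; split; lra.
have := M_bnd qj qk q; rewrite /phi edist_xx.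
move: (mx (bump qj q) (bump qk q)) => m /andP[h1 h2]; dm; lra.
Qed.

Lemma phi_sum (p1 p2 p3 x : pt) : 4 < e p1 p2 -> 4 < e p1 p3 -> 4 < e p2 p3 ->
  phi p1 p2 p3 x + phi p2 p1 p3 x + phi p3 p1 p2 x = 0.
Proof.
move=> h12 h13 h23.
have t12 := edist_tri p1 x p2; have t13 := edist_tri p1 x p3; have t23 := edist_tri p2 x p3.
rewrite (edist_sym p1 x) in t12 t13; rewrite (edist_sym p2 x) in t23.
have g1 := edist_ge0 x p1; have g2 := edist_ge0 x p2; have g3 := edist_ge0 x p3.
have bl : forall q, e x q < 1 -> bump q x = 1 - e x q.
  by move=> q h; rewrite /bump /mx ifT //; lra.
have bg : forall q, 1 <= e x q -> bump q x = 0.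
  by move=> q h; rewrite /bump /mx; case: ifP => // h2; apply/eqP; rewrite eq_le; apply/andP; split; lra.
have mxl : forall a c : R, a <= c -> mx a c = c by move=> a c h; rewrite /mx h.
have mxr : forall a c : R, c <= a -> mx a c = a.
  by move=> a c h; rewrite /mx; case: ifP => // h2; apply/eqP; rewrite eq_le h h2.
have mnl : forall a c : R, a <= c -> mn a c = a by move=> a c h; rewrite /mn h.
have mnr : forall a c : R, c <= a -> mn a c = c.
  by move=> a c h; rewrite /mn; case: ifP => // h2; apply/eqP; rewrite eq_le h h2.
rewrite /phi.
case: (ltP (e x p1) 1) => c1.
  rewrite (bl p1 c1) !bg; try lra.
  rewrite mxl // mxr ?mxl; try lra.
  rewrite mnr; last lra. rewrite !mnl; lra.
case: (ltP (e x p2) 1) => c2.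
  rewrite (bl p2 c2) !bg; try lra.
  rewrite (mxr (1 - e x p2) 0); last lra.
  rewrite !mxl; try lra.
  rewrite (mnr (0/2)); last lra. rewrite !mnl; lra.
case: (ltP (e x p3) 1) => c3.
  rewrite (bl p3 c3) !bg; try lra.
  rewrite !mxl; try lra.
  rewrite (mnr (0/2)); last lra. rewrite !mnl; lra.
rewrite !bg // !mxl // !mnl; lra.
Qed.


Lemma mxr' (a c : R) : c <= a -> mx a c = a.
Proof. by move=> h; rewrite /mx; case: ifP => // h2; apply/eqP; rewrite eq_le h h2. Qed.
Lemma mnl' (a c : R) : a <= c -> mn a c = a.
Proof. by move=> h; rewrite /mn h. Qed.

Lemma mxl' (a c : R) : a <= c -> mx a c = c.
Proof. by move=> h; rewrite /mx h. Qed.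
Lemma mnr' (a c : R) : c <= a -> mn a c = c.
Proof. by move=> h; rewrite /mn; case: ifP => // h2; apply/eqP; rewrite eq_le h h2. Qed.

Lemma edist_eq0 (a b : pt) : e a b = 0 -> a = b.
Proof.
move=> /eqP; rewrite /edist sqrtr_eq0 => h.
have h0 : \sum_(i < d) (a ord0 i - b ord0 i) ^+ 2 = 0.
  apply/eqP; rewrite eq_le h sumr_ge0 // => i _; exact: sqr_ge0.
have H := psumr_eq0P (fun i _ => sqr_ge0 (a ord0 i - b ord0 i)) h0.
apply/matrixP => i j; rewrite (ord1 i); apply/eqP; rewrite -subr_eq0 -sqrf_eq0.
by apply/eqP; apply: H.
Qed.

Definition dmin (x0 : pt) (s : seq pt) := \big[mn/1]_(y <- s | y != x0) e x0 y.

Lemma dmin_gt0 x0 s : 0 < dmin x0 s.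
Proof.
rewrite /dmin; elim: s => [|y s IH]; first by rewrite big_nil ltr01.
rewrite big_cons; case: ifP => // hy.
have : 0 < e x0 y.
  rewrite lt_def edist_ge0 andbT; apply/eqP => /edist_eq0 E.
  by move: hy; rewrite E eqxx.
move: IH; set m := \big[mn/1]_(j <- s | j != x0) e x0 j => IH h.
by rewrite /mn; case: ifP.
Qed.

Lemma dmin_le x0 s y : y \in s -> y != x0 -> dmin x0 s <= e x0 y.
Proof.
rewrite /dmin; elim: s => [|z s IH]; first by rewrite in_nil.
rewrite inE big_cons => /orP[/eqP <-|ys] hy.
  by rewrite hy /mn; case: ifP => // /negbT; rewrite -ltNge => /ltW.
have := IH ys hy; set m := \big[mn/1]_(j <- s | j != x0) e x0 j => h.
case: ifP => // _; rewrite /mn; case: ifP => // h2; exact: le_trans h2 h.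
Qed.


Lemma phi_le_half q qj qk x : phi q qj qk x <= 1/2.
Proof.
have := M_bnd qj qk x; rewrite /phi; move: (mx _ _) => m /andP[h1 h2].
case: (mn_cases (m / 2) (-1 + e x q)) => [[? ->]|[? ->]]; lra.
Qed.

Lemma strict_cert (q1 q2 q3 : pt) (T : current0 R d) (r : seq pt) (x0 : pt) :
  4 < e q1 q2 -> 4 < e q1 q3 -> 4 < e q2 q3 -> uniq r ->
  (forall x, T x != 0 -> x \in r) -> x0 \in r -> T x0 != 0 -> 2 <= e x0 q1 ->
  exists f1 f2 f3, [/\ cert q1 f1, cert q2 f2, cert q3 f3 &
     0 < \sum_(x <- r) (T x)%:~R * (f1 x + f2 x + f3 x)].
Proof.
move=> h12 h13 h23 ur hr x0r Tx0 far.
set psi := phi q1 q2 q3.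
set M := fun x => mx (bump q2 x) (bump q3 x).
have Mb : forall x, 0 <= M x <= 1 by move=> x; apply: M_bnd.
have lM : lip M by apply: lip_M.
have psi0 : psi x0 = M x0 / 2.
  rewrite /psi /phi -/(M x0); apply: mnl'; have /andP[? ?] := Mb x0; lra.
have psiy : forall y, psi y = mn (M y / 2) (-1 + e y q1) by [].
set eps := mn (1/2) (dmin x0 r / 2).
have dpos := dmin_gt0 x0 r.
have [eps_pos [eps_le eps_d]] : [/\ 0 < eps, eps <= 1/2 & eps <= dmin x0 r / 2].
  by rewrite /eps; case: (mn_cases (1/2) (dmin x0 r / 2)) => [[? ->]|[? ->]]; split; lra.
have eps_y : forall y, y \in r -> y != x0 -> eps <= e y x0 / 2.
  by move=> y yr yx; have := dmin_le x0 r y yr yx; rewrite edist_sym; lra.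
have c2 := phi_cert q2 q1 q3; have c3 := phi_cert q3 q1 q2.
have [lpsi bpsi psiq] := phi_cert q1 q2 q3; rewrite -/psi in lpsi bpsi psiq.
have psih : forall x, psi x <= 1/2 by move=> x; apply: phi_le_half.
have sum0 : forall x, psi x + phi q2 q1 q3 x + phi q3 q1 q2 x = 0 by move=> x; apply: phi_sum.
have Mx0 := Mb x0.
have trq : forall y, e x0 q1 <= e x0 y + e y q1 by move=> y; apply: edist_tri.
have E0 : forall y, e x0 y = e y x0 by move=> y; apply: edist_sym.
have Tx0R : (T x0)%:~R != 0 :> R by rewrite intr_eq0.
have rest : forall f1 : pt -> R, (forall y, y \in r -> y != x0 -> f1 y = psi y) ->
   \sum_(x <- r) (T x)%:~R * (f1 x + phi q2 q1 q3 x + phi q3 q1 q2 x)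
   = (T x0)%:~R * (f1 x0 - psi x0).
  move=> f1 hf1; rewrite (bigD1_seq x0) //= big1_seq ?addr0.
    by congr (_ * _); have := sum0 x0; lra.
  move=> y /andP[yx yr]; rewrite hf1 // sum0 mulr0 //.
case: (ltgtP (T x0) 0) => sT; last by move: Tx0; rewrite sT eqxx.
-
  have tneg : (T x0)%:~R < 0 :> R by rewrite ltrz0.
  exists (fun x => mn (psi x) ((psi x0 - eps) + e x x0)), (phi q2 q1 q3), (phi q3 q1 q2).
  split => //.
  + split.
    * exact: (@lip_mn psi (fun x => (psi x0 - eps) + e x x0) lpsi (lip_plus x0 _)).
    * move=> x; move: (bpsi x); rewrite ler_norml => /andP[? ?].
      have := psih x; have := edist_ge0 x x0.
      case: (mn_cases (psi x) (psi x0 - eps + e x x0)) => [[? ->]|[? ->]] => ? ?;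
        rewrite ler_norml; apply/andP; split; lra.
    * rewrite psiq mnl' //; have := edist_ge0 q1 x0; lra.
  + rewrite (rest (fun x => mn (psi x) ((psi x0 - eps) + e x x0))).
      rewrite edist_xx addr0 mnr'; last lra.
      have -> : psi x0 - eps - psi x0 = - eps by ring.
      by rewrite mulrN -mulNr mulr_gt0 // oppr_gt0.
    move=> y yr yx; apply: mnl'.
    have := lM y x0; have := eps_y y yr yx; rewrite psi0 psiy.
    case: (mn_cases (M y / 2) (-1 + e y q1)) => [[? ->]|[? ->]] => ? ?; lra.
-
  have tpos : 0 < (T x0)%:~R :> R by rewrite ltr0z.
  exists (fun x => mx (psi x) ((psi x0 + eps) - e x x0)), (phi q2 q1 q3), (phi q3 q1 q2).
  split => //.
  + split.
    * exact: (@lip_mx psi (fun x => (psi x0 + eps) - e x x0) lpsi (lip_minus x0 _)).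
    * move=> x; move: (bpsi x); rewrite ler_norml => /andP[? ?].
      have := psih x; have := edist_ge0 x x0.
      case: (mx_cases (psi x) (psi x0 + eps - e x x0)) => [[? ->]|[? ->]] => ? ?;
        rewrite ler_norml; apply/andP; split; lra.
    * rewrite psiq mxr' //; rewrite -E0; lra.
  + rewrite (rest (fun x => mx (psi x) ((psi x0 + eps) - e x x0))).
      rewrite edist_xx subr0 mxl'; last lra.
      have -> : psi x0 + eps - psi x0 = eps by ring.
      by rewrite mulr_gt0.
    move=> y yr yx; apply: mxr'.
    have := lM x0 y; have := eps_y y yr yx; have := trq y; rewrite psi0 psiy (E0 y).
    case: (mn_cases (M y / 2) (-1 + e y q1)) => [[? ->]|[? ->]] => ? ? ?; lra.
Qed.


End Aux.

Arguments edist_sym {R d}.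
Arguments edist_tri {R d}.
Arguments obj0_le {R d}.
Arguments obj_ge {R d T r p1 p2 p3 f1 f2 f3}.
Arguments strict_cert {R d q1 q2 q3 T r x0}.
Arguments phi_cert {R d}.
Arguments phi_sum {R d p1 p2 p3 x}.

Theorem mainTheorem2 (R : realType) (d : nat) (p1 p2 p3 : 'rV[R]_d) :
  4 < edist p1 p2 -> 4 < edist p1 p3 -> 4 < edist p2 p3 ->
  (forall T : current0 R d, integral_current0 T ->
     median_obj3 1 (dirac0 p1) (dirac0 p2) (dirac0 p3) (@zero0 R d)
     <= median_obj3 1 (dirac0 p1) (dirac0 p2) (dirac0 p3) T) /\
  (forall T : current0 R d, integral_current0 T ->
     median_obj3 1 (dirac0 p1) (dirac0 p2) (dirac0 p3) T
     = median_obj3 1 (dirac0 p1) (dirac0 p2) (dirac0 p3) (@zero0 R d) ->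
     T = @zero0 R d).
Proof.
move=> h12 h13 h23.
have h21 : 4 < edist p2 p1 by rewrite edist_sym.
have h31 : 4 < edist p3 p1 by rewrite edist_sym.
have h32 : 4 < edist p3 p2 by rewrite edist_sym.
have up0 := obj0_le p1 p2 p3.
have setup : forall T : current0 R d, integral_current0 T -> exists r : seq 'rV[R]_d,
    [/\ uniq r, (forall x, T x != 0 -> x \in r), p1 \in r, p2 \in r & p3 \in r].
  move=> T [s hs]; exists (undup (s ++ [:: p1; p2; p3])).
  split; first exact: undup_uniq.
  - by move=> x /hs xs; rewrite mem_undup mem_cat xs.
  - by rewrite mem_undup mem_cat !inE eqxx !orbT.
  - by rewrite mem_undup mem_cat !inE eqxx !orbT.
  - by rewrite mem_undup mem_cat !inE eqxx !orbT.
have low : forall T, integral_current0 T -> 3 <= median_obj3 1 (dirac0 p1) (dirac0 p2) (dirac0 p3) T.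
  move=> T /setup [r [ur hr r1 r2 r3]].
  have := obj_ge ur hr r1 r2 r3 (phi_cert p1 p2 p3) (phi_cert p2 p1 p3) (phi_cert p3 p1 p2).
  rewrite big1 ?addr0 // => x _; by rewrite phi_sum ?mulr0.
split; first by move=> T /low; apply: le_trans.
move=> T iT Eq.
case: (boolp.pselect (exists x0, T x0 != 0)) => [[x0 Tx0]|nE]; last first.
  apply: boolp.funext => x; apply/eqP; apply/negPn/negP => h; apply: nE; by exists x.
exfalso.
have [r [ur hr r1 r2 r3]] := setup T iT.
have x0r : x0 \in r by apply: hr.
suff : 3 < median_obj3 1 (dirac0 p1) (dirac0 p2) (dirac0 p3) T by rewrite Eq; lra.
case: (lerP 2 (edist x0 p1)) => far1.
  have [f1 [f2 [f3 [c1 c2 c3 pos]]]] := strict_cert h12 h13 h23 ur hr x0r Tx0 far1.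
  have := obj_ge ur hr r1 r2 r3 c1 c2 c3; lra.
have far2 : 2 <= edist x0 p2.
  have := edist_tri p1 x0 p2; rewrite (edist_sym p1 x0); lra.
have [f1 [f2 [f3 [c1 c2 c3 pos]]]] := strict_cert h21 h23 h13 ur hr x0r Tx0 far2.
have := obj_ge ur hr r1 r2 r3 c2 c1 c3.
have -> : \sum_(x <- r) (T x)%:~R * (f2 x + f1 x + f3 x) = \sum_(x <- r) (T x)%:~R * (f1 x + f2 x + f3 x).
  by apply: eq_bigr => x _; congr (_ * _); ring.
lra.
Qed.
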